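(* Let $0<\alpha\le1$ and let $f=f(t,v)$, $u=u(t,v)$ satisfy $f(t,v)\ge0$ and $u(0,v)\le0$ for $t>0$ and almost all $v\in\mathbb{R}^3$. Assume that for some $0<R<\infty$ and all $t>0$, $$\partial_t u-Q(f,u)\le0\ \text{ on } \{|v|>R\},\qquad u\le0\ \text{ on } \{0\le|v|\le R\}.$$ Then $u\le0$ for $t>0$ and almost all $v\in\mathbb{R}^3$.
   Context: $\beta=\frac{1+\alpha}{2}$, $\mathbb{S}^2_+$ a hemisphere, and for $v,v_*\in\mathbb{R}^3$, $n\in\mathbb{S}^2_+$, $v'=v-\beta((v-v_* )\cdot n)n$. The (hard-sphere, inelastic with restitution coefficient $\alpha$) collision operator $Q(f,g)$ is defined by the weak form $$\int_{\mathbb{R}^3}Q(f,g)(v)\phi(v)\,dv=\int_{\mathbb{R}^3}\int_{\mathbb{R}^3}\int_{\mathbb{S}^2_+}|(v-v_* )\cdot n|\,f(v_* )g(v)\,(\phi(v')-\phi(v))\,dn\,dv_*\,dv$$ for test functions $\phi$; equivalently $Q(f,g)=Q^+(f,g)-g\,Lf$ with $Lf(v)=\pi\int|v-v_*|f(v_* )\,dv_*$ and $Q^+(f,g)(v)=\alpha^{-2}\int\int_{\mathbb{S}^2_+}|(v-v_* )\cdot n|f({}'v_* )g({}'v)\,dn\,dv_*$, where ${}'v=v-\gamma((v-v_* )\cdot n)n$, ${}'v_*=v_*+\gamma((v-v_* )\cdot n)n$, $\gamma=\frac12(1+\frac1\alpha)$. Functions are assumed regular enough for these expressions to make sense. *)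

(* Defs.v *)
From HB Require Import structures.
From mathcomp Require Import all_boot all_order all_algebra.
From mathcomp Require Import all_classical all_reals all_analysis.
Import Order.TTheory GRing.Theory Num.Theory numFieldNormedType.Exports.
Set Implicit Arguments. Unset Strict Implicit. Unset Printing Implicit Defensive.
Local Open Scope classical_set_scope.
Local Open Scope ring_scope.

Definition vec3 (R : realType) := ((R * R) * R)%type.

Definition leb (R : realType) := @lebesgue_measure R.
Definition leb3 (R : realType) := ((@leb R \x @leb R) \x @leb R)%E.
(* Lebesgue measure on R^2 (angles (theta, phi) of the unit sphere) *)
Definition leb2 (R : realType) := (@leb R \x @leb R)%E.

Definition vadd (R : realType) (v w : vec3 R) : vec3 R :=
  ((v.1.1 + w.1.1, v.1.2 + w.1.2), v.2 + w.2).
Definition vscale (R : realType) (a : R) (v : vec3 R) : vec3 R :=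
  ((a * v.1.1, a * v.1.2), a * v.2).
Definition vsub (R : realType) (v w : vec3 R) : vec3 R := vadd v (vscale (-1) w).
Definition dot3 (R : realType) (v w : vec3 R) : R :=
  v.1.1 * w.1.1 + v.1.2 * w.1.2 + v.2 * w.2.
Definition norm3 (R : realType) (v : vec3 R) : R := Num.sqrt (dot3 v v).

(* Unit vector of spherical angles (theta, phi). The hemisphere S^2_+ is
   parametrized by theta in [0, pi/2], phi in [0, 2 pi], with surface
   measure dn = sin theta dtheta dphi. *)
Definition sph (R : realType) (a : R * R) : vec3 R :=
  ((sin a.1 * cos a.2, sin a.1 * sin a.2), cos a.1).
Definition in_hemi (R : realType) (a : R * R) : bool :=
  (0 <= a.1 <= pi / 2) && (0 <= a.2 <= 2 * pi).

Definition beta (R : realType) (alpha : R) : R := (1 + alpha) / 2.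

Definition vpost (R : realType) (alpha : R) (v vs n : vec3 R) : vec3 R :=
  vsub v (vscale (beta alpha * dot3 (vsub v vs) n) n).

(* The weight of the weak form, as a function of z = ((v, v_* ), (theta, phi)):
   |(v - v_* ) . n| f(v_* ) g(v), times the surface density
   1_{S^2_+} sin theta. *)
Definition coll_weight (R : realType) (f g : vec3 R -> R)
    (z : (vec3 R * vec3 R) * (R * R)) : R :=
  let v := z.1.1 in let vs := z.1.2 in let a := z.2 in
  (if in_hemi a then sin a.1 else 0) *
  `|dot3 (vsub v vs) (sph a)| * f vs * g v.

Definition weak_integrand (R : realType) (alpha : R) (f g phi : vec3 R -> R)
    (z : (vec3 R * vec3 R) * (R * R)) : R :=
  let v := z.1.1 in let vs := z.1.2 in let n := sph z.2 in
  coll_weight f g z * (phi (vpost alpha v vs n) - phi v).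

(* [is_Q alpha f g q] : q is the collision operator Q(f, g), defined by the
   weak form
     int Q(f,g) phi dv = int int int_{S^2_+} |(v-v_* ).n| f(v_* ) g(v)
                                   (phi(v') - phi(v)) dn dv_* dv
   for all (bounded measurable) test functions phi.  Regularity ("regular
   enough for these expressions to make sense"): q is integrable and the
   collision weight is integrable on R^3 x R^3 x S^2_+. *)
Definition is_Q (R : realType) (alpha : R) (f g q : vec3 R -> R) : Prop :=
  measurable_fun setT q /\
  (@leb3 R).-integrable setT (EFin \o q) /\
  ((@leb3 R \x @leb3 R) \x @leb2 R)%E.-integrable setT (EFin \o coll_weight f g) /\
  forall phi : vec3 R -> R, measurable_fun setT phi ->
    (exists M : R, forall v, `|phi v| <= M) ->
    (\int[@leb3 R]_v (q v * phi v)%:E =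
     \int[(@leb3 R \x @leb3 R) \x @leb2 R]_z (weak_integrand alpha f g phi z)%:E)%E.

Definition dt (R : realType) (u : R -> vec3 R -> R) (t : R) (v : vec3 R) : R :=
  derive1 (fun s => u s v) t.

(* Main.v *)
Require Import Defs.
From HB Require Import structures.
From mathcomp Require Import all_boot all_order all_algebra.
From mathcomp Require Import all_classical all_reals all_analysis.
From mathcomp Require Import ring lra.
Import Order.TTheory GRing.Theory Num.Theory numFieldNormedType.Exports.
Local Open Scope classical_set_scope.
Local Open Scope ring_scope.
Import HBNNSimple.

Lemma dini_lemma (R : realType) (G : R -> R) (t1 L : R) : 0 < t1 ->
  (forall s a : R, 0 <= s -> s <= a -> a <= t1 -> G a <= G s + L * (a - s)) ->
  (forall s e : R, 0 < s -> s <= t1 -> 0 < e ->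
     exists h : R, [/\ 0 < h, h <= s & G s <= G (s - h) + e * h]) ->
  G t1 <= G 0.
Proof.
move=> t10 Lip Dl.
have key : forall e : R, 0 < e -> G t1 <= G 0 + e * t1.
  move=> e e0.
  pose A := [set s : R | 0 <= s <= t1 /\ G t1 <= G s + e * (t1 - s)].
  have At1 : A t1 by split; [rewrite lexx ltW | rewrite subrr mulr0 addr0].
  have lbA : lbound A 0 by move=> x [/andP[]].
  have hinf : has_inf A by split; [exists t1 | exists 0].
  set s0 := inf A.
  have s0ge : 0 <= s0 by apply: lb_le_inf => //; exists t1.
  have s0le : s0 <= t1 by apply: ge_inf => //; exists 0.
  have Hs0 : G t1 <= G s0 + e * (t1 - s0).
    apply/ler_addgt0Pr => d d0.
    have dd : 0 < d / (`|L| + 1) by apply: divr_gt0 => //; rewrite ltr_wpDl.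
    have [a Aa alt] := inf_adherent dd hinf.
    have s0a : s0 <= a by apply: ge_inf => //; exists 0.
    case: Aa => /andP[a0 at1] Ha.
    have H1 := Lip s0 a s0ge s0a at1.
    have H2 : L * (a - s0) <= `|L| * (d / (`|L| + 1)).
      apply: (le_trans (ler_norm _)); rewrite normrM (ger0_norm (x := a - s0)) ?subr_ge0//.
      by apply: ler_wpM2l => //; rewrite lerBlDl ltW.
    have H3 : `|L| * (d / (`|L| + 1)) <= d.
      by rewrite mulrA ler_pdivrMr ?ltr_wpDl// mulrDr mulr1 mulrC lerDl ltW.
    have H4 : e * (t1 - a) <= e * (t1 - s0).
      by apply: ler_wpM2l; [exact: ltW| rewrite lerB].
    lra.
  have s00 : s0 <= 0.
    rewrite leNgt; apply/negP => s0pos.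
    have [h [h0 hs Gh]] := Dl s0 e s0pos s0le e0.
    have As : A (s0 - h).
      split; first by apply/andP; split; lra.
      have -> : e * (t1 - (s0 - h)) = e * (t1 - s0) + e * h by ring.
      lra.
    have := ge_inf (ex_intro _ 0 lbA) As; rewrite -/s0; lra.
  have s0E : s0 = 0 by apply/le_anti; rewrite s00 s0ge.
  by move: Hs0; rewrite s0E subr0.
apply/ler_addgt0Pr => e e0.
have := key (e / t1) (divr_gt0 e0 t10).
by rewrite mulfVK ?gt_eqF.
Qed.

Lemma ae_le0_integral d (T : measurableType d) (R : realType)
  (mu : {measure set T -> \bar R}) (f : T -> \bar R) :
  {ae mu, forall x, (f x <= 0)%E} -> (\int[mu]_x f x <= 0)%E.
Proof.
move=> hae.
have Hp : (\int[mu]_x f^\+%E x <= 0)%E.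
  rewrite ge0_integralTE; last by move=> x; exact: funepos_ge0.
  apply: ge_ereal_sup => _ [h /= hf <-].
  rewrite -integralT_nnsfun.
  rewrite -(integral0 mu setT).
  apply: ae_ge0_le_integral => //.
  - by move=> x _; rewrite lee_fin; exact: fun_ge0.
  - by apply/measurable_realfun.measurable_EFinP; exact: measurable_funPT.
  - apply: filterS hae => x fx _.
    apply: (le_trans (hf x)).
    by rewrite funeposE /cst; rewrite ge_max fx lexx.
rewrite integralE.
have Hn : (0 <= \int[mu]_x f^\-%E x)%E by apply: integral_ge0 => x _; exact: funeneg_ge0.
apply: (@le_trans _ _ (0 - 0)%E); last by rewrite sube0.
by apply: leeB.
Qed.

Lemma ae_le_integral_R d (T : measurableType d) (R : realType)
  (mu : {measure set T -> \bar R}) (f g : T -> R) :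
  mu.-integrable setT (EFin \o f) -> mu.-integrable setT (EFin \o g) ->
  {ae mu, forall x, f x <= g x} ->
  (\int[mu]_x (f x)%:E <= \int[mu]_x (g x)%:E)%E.
Proof.
move=> if_ ig hae.
rewrite -sube_le0 -(integralB _ if_ ig) //.
apply: ae_le0_integral; apply: filterS hae => x fx /=.
by rewrite -EFinB lee_fin subr_le0.
Qed.

Section PSF.
Local Open Scope ereal_scope.
Context d1 d2 (T1 : measurableType d1) (T2 : measurableType d2) (R : realType).
Variable m1 : sigma_finite_measure T1 R.
Variable m2 : sigma_finite_measure T2 R.

Lemma my_product_measure_sigma_finite : sigma_finite setT (m1 \x m2).
Proof.
have /sigma_finiteP[F [TF ndF Foo]] := sigma_finiteT m1.
have /sigma_finiteP[G [TG ndG Goo]] := sigma_finiteT m2.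
exists (fun n => F n `*` G n).
 rewrite -setXTT TF TG predeqE => -[x y]; split.
    move=> [/= [n _ Fnx] [k _ Gky]]; exists (maxn n k) => //; split.
    - by move: x Fnx; exact/subsetPset/ndF/leq_maxl.
    - by move: y Gky; exact/subsetPset/ndG/leq_maxr.
  by move=> [n _ []/= ? ?]; split; exists n.
move=> k; have [? ?] := Foo k; have [? ?] := Goo k.
split; first exact: measurableX.
by rewrite product_measure1E// lte_mul_pinfty// ge0_fin_numE.
Qed.

HB.instance Definition _ := Measure_isSigmaFinite.Build _ _ _ (m1 \x m2)
  my_product_measure_sigma_finite.
End PSF.
Section S. Variable R : realType.
Definition lebP2 := (@leb R \x @leb R)%E.
HB.instance Definition _ := Measure.on lebP2.
HB.instance Definition _ := Measure_isSigmaFinite.Build _ _ _ lebP2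
  (@my_product_measure_sigma_finite _ _ _ _ _ (@leb R) (@leb R)).
Definition lebP3 := (lebP2 \x @leb R)%E.
HB.instance Definition _ := Measure.on lebP3.
HB.instance Definition _ := Measure_isSigmaFinite.Build _ _ _ lebP3
  (@my_product_measure_sigma_finite _ _ _ _ _ lebP2 (@leb R)).
Definition lebP33 := (lebP3 \x lebP3)%E.
HB.instance Definition _ := Measure.on lebP33.
Lemma lift_null (N : set (vec3 R)) : measurable N -> leb3 N = 0%E ->
  ((@leb3 R \x @leb3 R) \x @leb2 R)%E ((setT `*` N) `*` setT) = 0%E.
Proof.
move=> mN N0.
have E1 := @product_measure1E _ _ _ _ _ lebP33 lebP2 (setT `*` N) setT.
have E2 := @product_measure1E _ _ _ _ _ lebP3 lebP3 setT N.
rewrite [LHS]E1; last by [].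
- have H33 : lebP33 (setT `*` N) = 0%E.
    rewrite /lebP33 E2 //; rewrite -(mule0 (lebP3 setT)); congr (_ * _)%E; exact: N0.
  rewrite -(mul0e (lebP2 setT)); congr (_ * _)%E; exact: H33.
- exact: measurableX.
Qed.
Lemma indic_sign (g : vec3 R -> R) (v y : vec3 R) :
  g v * (\1_[set w | 0 < g w] y - \1_[set w | 0 < g w] v) <= 0.
Proof.
rewrite !indicE.
have [gv|gv] := ltP 0 (g v).
  rewrite (mem_set (gv : [set w | 0 < g w] v)) /=.
  apply: mulr_ge0_le0; first exact: ltW.
  by rewrite subr_le0; case: (y \in _).
have -> : (v \in [set w | 0 < g w]) = false by apply: memNset => /= h; move: gv; rewrite leNgt h.
rewrite subr0; apply: mulr_le0_ge0 => //; case: (y \in _) => //.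
Qed.

Lemma weak_sign alpha (f g : vec3 R -> R) z :
  0 <= f z.1.2 ->
  weak_integrand alpha f g (\1_[set w | 0 < g w]) z <= 0.
Proof.
move=> fz; rewrite /weak_integrand /coll_weight /=.
rewrite -mulrA; apply: mulr_ge0_le0; last exact: indic_sign.
apply: mulr_ge0 => //; apply: mulr_ge0 => //.
case: ifPn => // /andP[/andP[a0 a1] _]; apply: sin_ge0_pi.
rewrite a0 /= (le_trans a1) //.
by rewrite ler_pdivrMr // ler_peMr // ?pi_ge0 // ler1n.
Qed.

Definition lebW := (lebP33 \x lebP2)%E.
HB.instance Definition _ := Measure.on lebW.

Lemma weak_le0 alpha (f g : vec3 R -> R) :
  {ae @leb3 R, forall v, 0 <= f v} ->
  (\int[((@leb3 R \x @leb3 R) \x @leb2 R)%E]_z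
      (weak_integrand alpha f g (\1_[set w | 0 < g w]) z)%:E <= 0)%E.
Proof.
move=> [N [mN N0 sub]].
change (\int[lebW]_z (weak_integrand alpha f g (\1_[set w | 0 < g w]) z)%:E <= 0)%E.
apply: ae_le0_integral.
exists ((setT `*` N) `*` setT); split.
- by apply: measurableX => //; apply: measurableX.
- exact: lift_null.
move=> [[v vs] a] /= hz; split => //; split => //; apply: sub => /= fz; apply: hz.
by rewrite lee_fin; exact: weak_sign.
Qed.
End S.

Lemma lip_bound (R : realType) (w : R -> R) (G t1 : R) :
  {within `[0, +oo[, continuous w} ->
  (forall t, 0 < t -> derivable w t 1) ->
  (forall t, 0 < t <= t1 -> `|derive1 w t| <= G) ->
  forall s a, 0 <= s -> s <= a -> a <= t1 -> `|w a - w s| <= G * (a - s).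
Proof.
move=> wc wd wb s a s0 sa at1.
have [->|sa'] := eqVneq s a; first by rewrite !subrr normr0 mulr0.
have sa2 : s < a by rewrite lt_neqAle sa' sa.
have H1 : forall x, x \in `]s, a[ -> is_derive x 1 w (derive1 w x).
  move=> x; rewrite in_itv /= => /andP[sx xa].
  rewrite derive1E; apply: derivableP; apply: wd; exact: le_lt_trans sx.
have H2 : {within `[s, a], continuous w}.
  apply: continuous_subspaceW wc => x /=; rewrite !in_itv /= => /andP[sx _].
  by rewrite (le_trans s0 sx).
have [c cin ->] := @MVT R w (derive1 w) s a sa2 H1 H2.
move: cin; rewrite in_itv /= => /andP[sc ca].
rewrite normrM (ger0_norm (x := a - s)) ?subr_ge0 //.
apply: ler_wpM2r; first by rewrite subr_ge0.
apply: wb; apply/andP; split; [exact: le_lt_trans sc | exact: (le_trans (ltW ca))].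
Qed.

Lemma seq_dnbhs (R : realType) (k : R^nat) :
  k @ \oo --> (0:R) -> (forall n, k n != 0) -> k @ \oo --> (0:R)^'.
Proof.
move=> k0 kn0 A hA.
have [N _ HN] := k0 _ hA.
exists N => // n /HN /=; apply; exact: kn0.
Qed.

Lemma deriv_seq (R : realType) (w : R -> R) (s : R) (k : R^nat) :
  derivable w s 1 -> k @ \oo --> (0:R) -> (forall n, k n != 0) ->
  (fun n => (k n)^-1 * (w (k n + s) - w s)) @ \oo --> derive1 w s.
Proof.
move=> dw k0 kn0.
have hk := @seq_dnbhs _ k k0 kn0.
have E : (fun h : R => h^-1 *: ((w \o shift s) (h *: 1) - w s)) =
           (fun h : R => h^-1 *: (w (h + s) - w s)).
  by apply/funext => h /=; rewrite /shift /= [h *: 1]mulr1.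
move: dw; rewrite /derivable E => dw.
exact: (cvg_comp _ _ hk dw).
Qed.

Lemma int_bound d (T : measurableType d) (R : realType)
  (mu : {measure set T -> \bar R}) (f g : T -> R) (c : R) :
  mu.-integrable setT (EFin \o g) -> 0 <= c -> (forall x, 0 <= g x) ->
  measurable_fun setT f -> (forall x, `|f x| <= c * g x) ->
  mu.-integrable setT (EFin \o f).
Proof.
move=> ig c0 g0 mf fb.
have ig' : mu.-integrable setT (EFin \o (fun x => c * g x)).
  apply: (eq_integrable measurableT (fun x => (c%:E * (g x)%:E)%E)); last first.
    exact: (integrableZl measurableT c ig).
  by move=> x _ /=; rewrite EFinM.
apply: le_integrable ig' => //.
  exact/measurable_realfun.measurable_EFinP.
move=> x _ /=; rewrite lee_fin (ger0_norm (x := c * g x)) ?mulr_ge0 //.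
Qed.

Lemma max_lip (R : realType) (x y : R) : Num.max x 0 <= Num.max y 0 + `|x - y|.
Proof.
rewrite ge_max; apply/andP; split.
  have h1 : y <= Num.max y 0 by rewrite le_max lexx.
  have h2 : x - y <= `|x - y| by exact: ler_norm.
  lra.
by apply: addr_ge0; [rewrite le_max lexx orbT | exact: normr_ge0].
Qed.

Lemma max_step (R : realType) (x y : R) :
  Num.max x 0 <= Num.max y 0 + (if 0 < x then x - y else 0).
Proof.
have h1 : y <= Num.max y 0 by rewrite le_max lexx.
have h0 : 0 <= Num.max y 0 by rewrite le_max lexx orbT.
case: ifPn => hx.
  by rewrite ge_max; apply/andP; split; lra.
by rewrite addr0 ge_max h0 andbT; apply: le_trans h0; rewrite leNgt.
Qed.

Theorem lemma3p1 (R : realType) (alpha : R) (f u : R -> vec3 R -> R) (rad : R)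
  (* 0 < alpha <= 1 *)
  (halpha : 0 < alpha <= 1)
  (* 0 < R < oo *)
  (hrad : 0 < rad)
  (* regularity of f and u *)
  (hfm : forall t, 0 < t -> measurable_fun setT (f t))
  (hum : forall t, 0 <= t -> measurable_fun setT (u t))
  (hucont : forall v, {within `[0, +oo[, continuous (fun s => u s v)})
  (hudiff : forall v t, 0 < t -> derivable (fun s => u s v) t 1)
  (hudom : forall T, 0 < T -> exists g : vec3 R -> R,
      (@leb3 R).-integrable setT (EFin \o g) /\
      forall t v, 0 < t <= T -> `|u t v| <= g v /\ `|dt u t v| <= g v)
  (* f >= 0 for t > 0 and a.a. v *)
  (hf : forall t, 0 < t -> {ae @leb3 R, forall v, 0 <= f t v})
  (* u(0, v) <= 0 for a.a. v *)
  (hu0 : {ae @leb3 R, forall v, u 0 v <= 0})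
  (* d_t u - Q(f, u) <= 0 on {|v| > R}, for all t > 0 *)
  (hsub : forall t, 0 < t -> exists q : vec3 R -> R,
      is_Q alpha (f t) (u t) q /\
      {ae @leb3 R, forall v, rad < norm3 v -> dt u t v - q v <= 0})
  (* u <= 0 on {0 <= |v| <= R}, for all t > 0 *)
  (hin : forall t, 0 < t -> {ae @leb3 R, forall v, norm3 v <= rad -> u t v <= 0}) :
  forall t, 0 < t -> {ae @leb3 R, forall v, u t v <= 0}.
Proof.
move=> t1 t10.
have [g [ig gb]] := hudom t1 t10.
have t1in : 0 < t1 <= t1 by rewrite t10 lexx.
have g0 v : 0 <= g v by apply: le_trans (gb t1 v t1in).1.
have lip v s a : 0 <= s -> s <= a -> a <= t1 -> `|u a v - u s v| <= g v * (a - s).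
  apply: (@lip_bound R (fun r => u r v) (g v) t1 (hucont v)).
  - by move=> t ht; exact: hudiff.
  - by move=> t ht; exact: (gb t v ht).2.
have mg : measurable_fun setT g.
  by apply/measurable_realfun.measurable_EFinP; case/integrableP: ig.
have bnd s v : 0 <= s -> s <= t1 -> `|u s v| <= 1 * (g v * (1 + t1)).
  move=> s0 st1.
  have h1 := (gb t1 v t1in).1.
  have h2 := lip v s t1 s0 st1 (lexx _).
  have h3 : `|u s v| <= `|u t1 v| + `|u t1 v - u s v|.
    have := ler_normD (u t1 v) (u s v - u t1 v).
    by rewrite addrC subrK distrC.
  rewrite mul1r mulrDr mulr1; apply: le_trans h3 _; apply: lerD => //.
  apply: le_trans h2 _; apply: (ler_wpM2l (g0 v)).
  by rewrite lerBlDr lerDl.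
have ig1 : (@leb3 R).-integrable setT (EFin \o (fun v => g v * (1 + t1))).
  have c0 : 0 <= 1 + t1 by rewrite addr_ge0 // ltW.
  apply: (@int_bound _ _ _ (@leb3 R) _ g (1 + t1) ig) => //.
  - by apply: measurable_realfun.measurable_funM => //; exact: measurable_cst.
  - by move=> v; rewrite ger0_norm ?mulr_ge0 // mulrC.
pose m s v := Num.max (u s v) 0.
have mm s : 0 <= s -> measurable_fun setT (m s).
  move=> hs; apply: measurable_realfun.measurable_maxr; [exact: hum | exact: measurable_cst].
have im s : 0 <= s -> s <= t1 -> (@leb3 R).-integrable setT (EFin \o m s).
  move=> s0 st1.
  have g1 v : 0 <= g v * (1 + t1) by rewrite mulr_ge0 // addr_ge0 // ltW.
  have fb v : `|m s v| <= 1 * (g v * (1 + t1)).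
    apply: le_trans _ (bnd s v s0 st1).
    rewrite /m ger0_norm ?le_max ?lexx ?orbT // ge_max normr_ge0 andbT; exact: ler_norm.
  exact: (@int_bound _ _ _ (@leb3 R) _ _ 1 ig1 ler01 g1 (mm s s0) fb).
pose G s := \int[@leb3 R]_v (m s v).
pose L := \int[@leb3 R]_v (g v).
have P1 s a : 0 <= s -> s <= a -> a <= t1 -> G a <= G s + L * (a - s).
  move=> s0 sa at1.
  have a0 : 0 <= a by exact: le_trans sa.
  have igs : (@leb3 R).-integrable setT (EFin \o (fun v => g v * (a - s))).
    apply: (@int_bound _ _ _ (@leb3 R) _ g (a - s) ig) => //; first by rewrite subr_ge0.
    - by apply: measurable_realfun.measurable_funM => //; exact: measurable_cst.
    - by move=> v; rewrite normrM !ger0_norm ?subr_ge0 // mulrC.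
  rewrite /G /L -RintegralZr // -RintegralD //; last exact: im (le_trans sa at1).
  apply: le_Rintegral => //; first exact: im.
  - have := integrableD measurableT (im s s0 (le_trans sa at1)) igs.
    by apply: eq_integrable => // v _ /=; rewrite EFinD.
  move=> v _; apply: le_trans (@max_lip R (u a v) (u s v)) _; rewrite lerD2l.
  exact: lip.
have G0 : G 0 <= 0.
  have H : (\int[@leb3 R]_v (m 0 v)%:E <= 0)%E.
    apply: ae_le0_integral; have [N [mN N0 sub]] := hu0.
    exists N; split => // v /= hv; apply: sub => /= h0; apply: hv.
    by rewrite lee_fin ge_max h0 lexx.
  rewrite /G /Rintegral; move: H.
  by case: (\int[@leb3 R]_v (m 0 v)%:E)%E => [r| |] //=; rewrite lee_fin.
have P2 : forall s e, 0 < s -> s <= t1 -> 0 < e ->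
    exists h, [/\ 0 < h, h <= s & G s <= G (s - h) + e * h].
  move=> s e s0 st1 e0.
  pose P := [set v | 0 < u s v].
  have mP : measurable P.
    have -> : P = setT `&` (u s @^-1` `]0, +oo[).
      by rewrite setTI; apply/seteqP; split => v /=; rewrite in_itv /= andbT.
    by apply: (hum s (ltW s0)) => //; exact: measurable_itv.
  pose ind : vec3 R -> R := \1_P.
  have mind : measurable_fun setT ind := @measurable_realfun.measurable_indic _ _ R setT P mP.
  have indE v : ind v = if 0 < u s v then 1 else 0.
    rewrite /ind indicE; case: ifPn => h.
      by rewrite (mem_set (h : P v)).
    by rewrite memNset // => /= H; move: h; rewrite H.
  have ind0 v : 0 <= ind v by rewrite indE; case: ifP.
  have ind1 v : ind v <= 1 by rewrite indE; case: ifP.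
  pose hn (n : nat) := s / n.+1%:R.
  have hn0 n : 0 < hn n by apply: divr_gt0 => //; exact: ltr0Sn.
  have hns n : hn n <= s.
    by rewrite /hn ler_pdivrMr ?ltr0Sn // -{1}(mulr1 s) ler_pM2l // ler1n.
  pose D n v := ind v * ((u s v - u (s - hn n) v) / hn n).
  pose Dl v := ind v * dt u s v.
  have mD n : measurable_fun setT (D n).
    apply: measurable_realfun.measurable_funM => //.
    apply: measurable_realfun.measurable_funM; last exact: measurable_cst.
    apply: measurable_realfun.measurable_funB; first exact: hum (ltW s0).
    by apply: hum; rewrite subr_ge0.
  have Dbnd n v : `|D n v| <= 1 * g v.
    have hq : `|(u s v - u (s - hn n) v) / hn n| <= g v.
      have a0 : 0 <= s - hn n by rewrite subr_ge0.
      have a1 : s - hn n <= s by rewrite lerBlDr lerDl ltW.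
      have H := lip v (s - hn n) s a0 a1 st1.
      rewrite (_ : s - (s - hn n) = hn n) in H; last by rewrite opprB addrC subrK.
      by rewrite normrM normfV (gtr0_norm (hn0 n)) ler_pdivrMr.
    rewrite /D normrM; apply: ler_pM => //; by rewrite ger0_norm.
  have Dcvg v : D ^~ v @ \oo --> Dl v.
    have hk : (fun n => - hn n) @ \oo --> (0:R).
      have hh : hn @ \oo --> (0:R).
        have := @cvgMl_tmp R nat \oo _ harmonic s 0 (@cvg_harmonic R).
        rewrite mulr0; apply; exact: eventually_filter.
      have := cvgN hh; rewrite oppr0; apply; exact: eventually_filter.
    have hk0 n : - hn n != 0 by rewrite oppr_eq0 gt_eqF.
    have := @deriv_seq R (fun r => u r v) s (fun n => - hn n) (hudiff v s s0) hk hk0.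
    have -> : (fun n => (- hn n)^-1 * (u (- hn n + s) v - u s v)) =
              (fun n => (u s v - u (s - hn n) v) / hn n).
      by apply/funext => n; rewrite invrN mulNr -mulrN opprB mulrC (addrC (- hn n) s).
    move=> hQ.
    have := @cvgMl_tmp R nat \oo _ _ (ind v) _ hQ.
    apply; exact: eventually_filter.
  have mDl : measurable_fun setT Dl :=
    measurable_realfun.measurable_fun_cvg mD (fun v _ => Dcvg v).
  have mDe := fun n => (measurable_realfun.measurable_EFinP setT (D n)).2 (mD n).
  have mDle := (measurable_realfun.measurable_EFinP setT Dl).2 mDl.
  have fDl : {ae @leb3 R, forall x, setT x ->
      (fun n => (EFin \o D n) x) @ \oo --> (EFin \o Dl) x}.
    apply: aeW => v _; apply: cvg_EFin; [exact: nearW | exact: Dcvg v].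
  have fDg : {ae @leb3 R, forall x n, setT x -> (`|(EFin \o D n) x| <= (EFin \o g) x)%E}.
    apply: aeW => v n _ /=; rewrite lee_fin -[g v]mul1r; exact: Dbnd.
  have [iDl _ Icvg] := @dominated_convergence _ _ R (@leb3 R) setT measurableT
    (fun n => EFin \o D n) (EFin \o Dl) (EFin \o g) mDe mDle fDl ig fDg.
  have Dl_le0 : (\int[@leb3 R]_v (Dl v)%:E <= 0)%E.
    have [q [[mq [iq [iw hw]]] hq]] := hsub s s0.
    have bind : exists M : R, forall v, `|ind v| <= M.
      by exists 1 => v; rewrite ger0_norm.
    have W := hw ind mind bind.
    have iqi : (@leb3 R).-integrable setT (EFin \o (fun v => q v * ind v)).
      apply: le_integrable iq => //.
        apply/measurable_realfun.measurable_EFinP.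
        exact: measurable_realfun.measurable_funM.
      move=> v _ /=; rewrite lee_fin normrM -[X in _ <= X]mulr1.
      by apply: ler_pM => //; rewrite ger0_norm.
    have le1 : (\int[@leb3 R]_v (Dl v)%:E <= \int[@leb3 R]_v (q v * ind v)%:E)%E.
      apply: ae_le_integral_R iDl iqi _.
      apply: (@filterS2 _ _ (@ae_filter_ringOfSetsType _ _ R (@leb3 R)) _ _ _ _ hq (hin s s0)) => v h1 h2.
      rewrite /Dl mulrC.
      have [hr|hr] := ltP rad (norm3 v).
        by apply: ler_wpM2r => //; move: (h1 hr); rewrite subr_le0.
      have := h2 hr; rewrite indE leNgt => /negbTE ->.
      by rewrite !mulr0.
    apply: le_trans le1 _; rewrite W.
    exact: weak_le0 (hf s s0).
  pose a := fine (\int[@leb3 R]_v (Dl v)%:E)%E.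
  have finDl := integrable_fin_num measurableT iDl.
  have aE : (\int[@leb3 R]_v (Dl v)%:E)%E = a%:E := esym (fineK finDl).
  have a0 : a <= 0 by rewrite -lee_fin -aE.
  have Icvg' : (fun n => \int[@leb3 R]_v (D n v)%:E)%E @ \oo --> a%:E.
    by rewrite -aE; exact: Icvg.
  have [_ Rcvg] := (fine_cvgP _ _).1 Icvg'.
  have ae : a < e by apply: le_lt_trans a0 e0.
  have [N _ HN] := cvgr_lt _ Rcvg _ ae.
  have IN := HN N (leqnn N).
  exists (hn N); split => //.
  have a0' : 0 <= s - hn N by rewrite subr_ge0.
  have a1' : s - hn N <= t1 by apply: le_trans st1; rewrite lerBlDr lerDl ltW.
  have iDN := @int_bound _ _ _ (@leb3 R) _ _ 1 ig ler01 g0 (mD N) (Dbnd N).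
  have ihD : (@leb3 R).-integrable setT (EFin \o (fun v => hn N * D N v)).
    apply: (@int_bound _ _ _ (@leb3 R) _ _ (hn N) ig (ltW (hn0 N)) g0).
      by apply: measurable_realfun.measurable_funM; [exact: measurable_cst | exact: mD].
    move=> v; rewrite normrM (gtr0_norm (hn0 N)); apply: ler_wpM2l; first exact: ltW.
    by rewrite -[g v]mul1r; exact: Dbnd.
  have ims := im (s - hn N) a0' a1'.
  rewrite /G.
  apply: (@le_trans _ _ (\int[@leb3 R]_v (m (s - hn N) v + hn N * D N v))).
    apply: le_Rintegral => //; first exact: im (ltW s0) st1.
      have := integrableD measurableT ims ihD.
      by apply: eq_integrable => // v _ /=; rewrite EFinD.
    move=> v _.
    have -> : hn N * D N v = (if 0 < u s v then u s v - u (s - hn N) v else 0).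
      rewrite /D indE; case: ifP => _.
        by rewrite mul1r mulrC divfK // gt_eqF.
      by rewrite !mul0r mulr0.
    exact: max_step.
  rewrite RintegralD // RintegralZl // lerD2l [e * _]mulrC.
  by apply: ler_wpM2l; [exact: ltW | exact: ltW IN].



have Gt1 : G t1 <= 0 := le_trans (@dini_lemma R G t1 L t10 P1 P2) G0.
have Ge0 : (\int[@leb3 R]_v (m t1 v)%:E)%E = 0%E.
  have fin := integrable_fin_num measurableT (im t1 (ltW t10) (lexx _)).
  rewrite -(fineK fin); congr EFin; apply/le_anti; rewrite Gt1 /=.
  by apply: Rintegral_ge0 => v _; rewrite le_max lexx orbT.
have Habs : (\int[@leb3 R]_v `|(EFin \o m t1) v| = 0)%E.
  rewrite -Ge0; apply: eq_integral => v _ /=.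
  by rewrite ger0_norm // le_max lexx orbT.
have mm1 := (measurable_realfun.measurable_EFinP setT (m t1)).2 (mm t1 (ltW t10)).
have := (ae_eq_integral_abs (@leb3 R) measurableT mm1).1 Habs.
apply: filterS => v /(_ I) /= [E].
have : u t1 v <= m t1 v by rewrite le_max lexx.
by rewrite E.
Qed.
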